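(* Let $1<\rho<2$ be real and $Z[\rho]=\{\pm z: z=\sum_{k=0}^n z_k\rho^k,\ n\ge0,\ z_k\in\{0,1\}\}$. If $\lambda>0$ and $\lambda\mathbb{Z}\subset Z[\rho]$, then $\lambda$ and $\rho$ are of the same type (both algebraic or both transcendental). If $\rho$ is algebraic, then $\rho$ and $\lambda$ both lie in the number field $\mathbb{Q}(\rho)$ and are algebraic integers. *)

(* Defs.v *)
From HB Require Import structures.
From mathcomp Require Import all_boot all_order all_algebra.
From mathcomp Require Import reals.
Set Implicit Arguments. Unset Strict Implicit. Unset Printing Implicit Defensive.
Import Order.TTheory GRing.Theory Num.Theory.
Local Open Scope ring_scope.

Definition Zrho (R : realType) (rho x : R) : Prop :=
  exists (n : nat) (d : nat -> bool),
    x = \sum_(k < n.+1) (d k)%:R * rho ^+ k \/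
    x = - \sum_(k < n.+1) (d k)%:R * rho ^+ k.

Definition is_algebraic (R : realType) (x : R) : Prop :=
  algebraicOver (ratr : rat -> R) x.

Definition is_alg_integer (R : realType) (x : R) : Prop :=
  integralOver (intr : int -> R) x.

Definition in_Qfield (R : realType) (rho x : R) : Prop :=
  exists p q : {poly rat},
    (map_poly ratr q).[rho] != 0 /\
    x = (map_poly ratr p).[rho] / (map_poly ratr q).[rho].

(* Main.v *)
Require Import Defs.
From HB Require Import structures.
From mathcomp Require Import all_boot all_order all_algebra.
From mathcomp Require Import reals.
Import Order.TTheory GRing.Theory Num.Theory.
Set Implicit Arguments. Unset Strict Implicit.
Local Open Scope ring_scope.

Lemma top_rep (R : realType) (rho : R) (n : nat) (d : nat -> bool) :
  0 < \sum_(k < n.+1) (d k)%:R * rho ^+ k ->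
  exists N : nat, \sum_(k < n.+1) (d k)%:R * rho ^+ k
                  = rho ^+ N + \sum_(k < N) (d k)%:R * rho ^+ k.
Proof.
elim: n => [|n IH].
  rewrite big_ord1; case: (d 0%N) => /= h.
    by exists 0%N; rewrite big_ord0 mul1r addr0.
  by rewrite mul0r ltxx in h.
rewrite big_ord_recr /=; case E: (d n.+1) => /= h.
  by exists n.+1; rewrite mul1r addrC.
rewrite mul0r addr0 in h *; exact: IH.
Qed.

Lemma pos_rep (R : realType) (rho x : R) :
  0 <= rho -> Zrho rho x -> 0 < x ->
  exists N (d : nat -> bool), x = rho ^+ N + \sum_(k < N) (d k)%:R * rho ^+ k.
Proof.
move=> r0 [n [d [->|->]]] h.
  by have [N ->] := top_rep h; exists N, d.
have : 0 <= \sum_(k < n.+1) (d k)%:R * rho ^+ k.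
  by apply: sumr_ge0 => k _; rewrite mulr_ge0 ?exprn_ge0.
by rewrite -oppr_le0 => /(lt_le_trans h); rewrite ltxx.
Qed.

Lemma rep_bounds (R : realType) (rho : R) N (d : nat -> bool) :
  1 <= rho ->
  rho ^+ N <= rho ^+ N + \sum_(k < N) (d k)%:R * rho ^+ k <= N.+1%:R * rho ^+ N.
Proof.
move=> r1; have r0 : 0 <= rho by apply: le_trans r1.
apply/andP; split.
  by rewrite lerDl; apply: sumr_ge0 => k _; rewrite mulr_ge0 ?exprn_ge0.
rewrite -addn1 natrD mulrDl mul1r [X in _ <= X]addrC lerD2l.
have -> : N%:R * rho ^+ N = \sum_(k < N) rho ^+ N.
  by rewrite sumr_const card_ord mulr_natl.
apply: ler_sum => k _; apply: le_trans (_ : rho ^+ k <= _).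
  by case: (d k); rewrite ?mul1r ?mul0r ?exprn_ge0.
by apply: ler_weXn2l => //; apply: ltnW.
Qed.

Lemma sum_trunc (R : realType) (F : nat -> R) n N :
  (forall k, (n <= k)%N -> F k = 0) -> (n <= N)%N ->
  \sum_(k < N) F k = \sum_(k < n) F k.
Proof.
move=> h nN; rewrite -(subnKC nN) big_split_ord /= -[RHS]addr0.
congr (_ + _); apply: big1 => i _; apply: h; exact: leq_addr.
Qed.

Definition ext (d : nat -> bool) (N1 : nat) (k : nat) : bool :=
  ((k < N1)%N && d k) || (k == N1).

Lemma ext_sum (R : realType) (rho : R) (d : nat -> bool) N1 N :
  (N1 < N)%N ->
  rho ^+ N1 + \sum_(k < N1) (d k)%:R * rho ^+ k
  = \sum_(k < N) (ext d N1 k)%:R * rho ^+ k.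
Proof.
move=> lt; rewrite (@sum_trunc R (fun k => (ext d N1 k)%:R * rho ^+ k) N1.+1 N) //.
  rewrite big_ord_recr /= /ext ltnn eqxx /= mul1r addrC; congr (_ + _).
  by apply: eq_bigr => i _; rewrite ltn_ord /= ltn_eqF ?orbF.
move=> k le; rewrite /ext.
have -> : (k < N1)%N = false by apply/negbTE; rewrite -leqNgt ltnW.
by rewrite /= gtn_eqF // mul0r.
Qed.

Lemma integral_exp (S : comNzRingType) (R : realType) (f : {rmorphism S -> R}) (x : R) k :
  integralOver f x -> integralOver f (x ^+ k).
Proof.
move=> h; elim: k => [|k IH]; first by rewrite expr0; apply: integral1.
by rewrite exprS; apply: integral_mul.
Qed.

Lemma lam_rep (R : realType) (rho lambda : R) :
  1 < rho -> 0 < lambda -> (forall m : int, Zrho rho (lambda * m%:~R)) ->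
  exists N1 (d1 : nat -> bool), lambda = rho ^+ N1 + \sum_(k < N1) (d1 k)%:R * rho ^+ k.
Proof.
move=> r1 l0 hZ; have r0 : 0 <= rho by apply: le_trans (ltW r1).
have := hZ 1%:Z; rewrite -pmulrn mulr1 => h.
exact: pos_rep r0 h l0.
Qed.

Lemma key_int (S : comNzRingType) (R : realType) (f : {rmorphism S -> R}) (rho lambda : R) :
  1 < rho -> 0 < lambda -> (forall m : int, Zrho rho (lambda * m%:~R)) ->
  integralOver f rho.
Proof.
move=> r1 l0 hZ; have r0 : 0 <= rho by apply: le_trans (ltW r1).
have r1' : 1 <= rho by apply: ltW.
have [N1 [d1 Hl]] := lam_rep r1 l0 hZ.
have := hZ (N1.+2)%:Z; rewrite -pmulrn => hm.
have m0 : 0 < lambda * N1.+2%:R by rewrite mulr_gt0 // ltr0n.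
have [N [d Hm]] := pos_rep r0 hm m0.
have ltN : (N1 < N)%N.
  rewrite ltnNge; apply/negP => le.
  have /andP[_ b1] := rep_bounds N d r1'.
  have /andP[b2 _] := rep_bounds N1 d1 r1'.
  rewrite -Hm -Hl in b1 b2.
  have b3 : N.+1%:R * rho ^+ N <= N1.+1%:R * rho ^+ N1.
    by apply: ler_pM; rewrite ?ler0n ?exprn_ge0 ?ler_nat // ler_weXn2l.
  have b4 : N1.+1%:R * rho ^+ N1 < lambda * N1.+2%:R.
    rewrite mulrC; apply: lt_le_trans (_ : rho ^+ N1 * N1.+2%:R <= _).
      by rewrite ltr_pM2l ?ltr_nat // exprn_gt0 // (lt_trans ltr01).
    by apply: ler_pM; rewrite ?ler0n ?exprn_ge0.
  by have := le_lt_trans (le_trans b1 b3) b4; rewrite ltxx.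
have Hl' := ext_sum rho d1 ltN; rewrite -Hl in Hl'.
pose p : {poly R} := 'X^N + \poly_(k < N) ((d k)%:R - N1.+2%:R * (ext d1 N1 k)%:R).
have mon : p \is monic.
  by rewrite monicE lead_coefDl ?lead_coefXn // size_polyXn ltnS size_poly.
have rt : root p rho.
  rewrite rootE hornerD hornerXn horner_poly; apply/eqP.
  under eq_bigr do rewrite mulrBl -mulrA.
  rewrite sumrB -mulr_sumr -Hl' addrA -Hm mulrC subrr //.
apply: integral_root_monic mon rt _.
apply/integral_poly => i; rewrite coefD coefXn coef_poly.
apply: integral_add; first exact: integral_nat.
case: ifP => _; last exact: integral0.
apply: integral_sub; first exact: integral_nat.
by apply: integral_mul; apply: integral_nat.
Qed.

Theorem mainTheorem13 (R : realType) (rho lambda : R) :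
  1 < rho -> rho < 2 -> 0 < lambda ->
  (forall m : int, Zrho rho (lambda * m%:~R)) ->
  (is_algebraic lambda <-> is_algebraic rho) /\
  (is_algebraic rho ->
     in_Qfield rho rho /\ in_Qfield rho lambda /\
     is_alg_integer rho /\ is_alg_integer lambda).
Proof.
move=> r1 _ l0 hZ.
have [N1 [d1 Hl]] := lam_rep r1 l0 hZ.
have Hl' := ext_sum rho d1 (ltnSn N1); rewrite -Hl in Hl'.
have intlam : forall (S : comNzRingType) (f : {rmorphism S -> R}),
    integralOver f rho -> integralOver f lambda.
  move=> S f h; rewrite Hl'; apply: (big_ind (integralOver f)).
  - exact: integral0.
  - by move=> x y; apply: integral_add.
  - by move=> i _; apply: integral_mul; [apply: integral_nat | apply: integral_exp].
have irho : integralOver (intr : int -> R) rho := key_int _ r1 l0 hZ.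
have qrho : integralOver (ratr : rat -> R) rho := key_int _ r1 l0 hZ.
have arho : is_algebraic rho by apply/integral_algebraic.
have alam : is_algebraic lambda by apply/integral_algebraic; apply: intlam.
split; first by split.
move=> _; split; last split; last split => //; last exact: intlam.
  exists 'X, 1; rewrite rmorph1 map_polyX hornerX hornerC divr1; split => //.
  exact: oner_neq0.
exists (\poly_(k < N1.+1) (ext d1 N1 k)%:R), 1.
rewrite rmorph1 hornerC divr1; split; first exact: oner_neq0.
have -> : map_poly (ratr : rat -> R) (\poly_(k < N1.+1) (ext d1 N1 k)%:R)
    = \poly_(k < N1.+1) (ext d1 N1 k)%:R.
  apply/polyP => i; rewrite coef_map !coef_poly.
  by case: (i < N1.+1)%N; rewrite /= ?ratr_nat ?raddf0 ?rmorph_nat ?rmorph0.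
by rewrite Hl' horner_poly.
Qed.
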